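(* Fix real numbers $a$, $b>0$, $c>0$, and let $P(x,y)=\tfrac12+(x-y)\bigl(c-b(x+y)+axy\bigr)$. Let $\mathcal D=\{(x,y)\in\mathbb R_+^2: 0<P(x,y)<1\}$. Then $\mathcal D$ is a non-convex set that contains the diagonal $\{(x,x):x\ge 0\}$, is symmetric with respect to the reflection $(x,y)\mapsto(y,x)$, is unbounded along the diagonal, and is bounded along every non-diagonal ray in $\mathbb R_+^2$, i.e. for every $(u,v)\in\mathbb R_+^2$ with $u\neq v$, the set $\{r\ge 0: (ru,rv)\in\mathcal D\}$ is bounded.
   Context: $\mathbb R_+=[0,\infty)$. *)

(* Defs.v *)
From Stdlib Require Import Reals.
Open Scope R_scope.

Definition Ppoly (a b c x y : R) : R :=
  / 2 + (x - y) * (c - b * (x + y) + a * x * y).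

Definition Dset (a b c : R) (p : R * R) : Prop :=
  0 <= fst p /\ 0 <= snd p /\ 0 < Ppoly a b c (fst p) (snd p) < 1.

Definition convex2 (S : R * R -> Prop) : Prop :=
  forall p q t, S p -> S q -> 0 <= t <= 1 ->
    S ((1 - t) * fst p + t * fst q, (1 - t) * snd p + t * snd q).

Definition boundedR (A : R -> Prop) : Prop :=
  exists M, forall r, A r -> Rabs r <= M.

(* Main.v *)
Require Import Defs.
From Stdlib Require Import Reals.
From Stdlib Require Import Lra Psatz.
Open Scope R_scope.

Lemma ray_bound (a b c u v : R) (hb : 0 < b) (hc : 0 < c) :
  0 <= u -> 0 <= v -> u <> v ->
  boundedR (fun r => 0 <= r /\ Dset a b c (r * u, r * v)).
Proof.
  intros hu hv huv.
  set (dd := u - v). set (SS := u + v). set (AA := a * (u * v)).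
  assert (hd : 0 < Rabs dd) by (apply Rabs_pos_lt; unfold dd; lra).
  assert (hS : 0 < SS) by (unfold SS; lra).
  assert (key : forall r, 0 <= r -> Dset a b c (r*u, r*v) ->
             r * Rabs dd * Rabs (c - b * SS * r + AA * r * r) < /2).
  { intros r hr [_ [_ [h1 h2]]]. unfold Ppoly in h1, h2; simpl in h1, h2.
    assert (e : (r * u - r * v) * (c - b * (r * u + r * v) + a * (r * u) * (r * v))
                = r * dd * (c - b * SS * r + AA * r * r)) by (unfold dd, SS, AA; ring).
    rewrite e in h1, h2.
    rewrite <- (Rabs_pos_eq r hr) at 1. rewrite <- !Rabs_mult.
    apply Rabs_def1; lra. }
  destruct (Rlt_or_le 0 AA) as [hA | hA].
  - exists (b * SS / AA + / (2 * Rabs dd * c)). intros r [hr hD].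
    rewrite Rabs_pos_eq by lra.
    destruct (Rle_or_lt r (b * SS / AA + / (2 * Rabs dd * c))) as [|hlt]; [lra|].
    exfalso. pose proof (key r hr hD) as K.
    assert (h1 : b * SS / AA <= r).
    { assert (0 < / (2 * Rabs dd * c)) by (apply Rinv_0_lt_compat; nra). lra. }
    assert (h2 : / (2 * Rabs dd * c) < r).
    { assert (0 <= b * SS / AA) by (unfold Rdiv; apply Rmult_le_pos; [nra| left; apply Rinv_0_lt_compat; lra]). lra. }
    assert (h1' : b * SS <= AA * r).
    { apply (Rmult_le_compat_l AA) in h1; [|lra]. field_simplify in h1; lra. }
    assert (h2' : / 2 < r * Rabs dd * c).
    { apply (Rmult_lt_compat_l (2 * Rabs dd * c)) in h2; [|nra].
      rewrite Rinv_r in h2 by nra. lra. }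
    assert (hg : c <= c - b * SS * r + AA * r * r) by nra.
    rewrite (Rabs_pos_eq (c - b * SS * r + AA * r * r)) in K by lra.
    assert (0 <= r * Rabs dd) by nra.
    assert (0 <= (r * Rabs dd) * ((c - b * SS * r + AA * r * r) - c)) by (apply Rmult_le_pos; lra).
    nra.
  - exists (2 * c / (b * SS) + / (2 * Rabs dd * c)). intros r [hr hD].
    rewrite Rabs_pos_eq by lra.
    destruct (Rle_or_lt r (2 * c / (b * SS) + / (2 * Rabs dd * c))) as [|hlt]; [lra|].
    exfalso. pose proof (key r hr hD) as K.
    assert (h1 : 2 * c / (b * SS) <= r).
    { assert (0 < / (2 * Rabs dd * c)) by (apply Rinv_0_lt_compat; nra). lra. }
    assert (h2 : / (2 * Rabs dd * c) < r).
    { assert (0 <= 2 * c / (b * SS)) by (unfold Rdiv; apply Rmult_le_pos; [nra| left; apply Rinv_0_lt_compat; nra]). lra. }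
    assert (h1' : 2 * c <= b * SS * r).
    { apply (Rmult_le_compat_l (b * SS)) in h1; [|nra]. field_simplify in h1; nra. }
    assert (h2' : / 2 < r * Rabs dd * c).
    { apply (Rmult_lt_compat_l (2 * Rabs dd * c)) in h2; [|nra].
      rewrite Rinv_r in h2 by nra. lra. }
    assert (hg : c - b * SS * r + AA * r * r <= - c) by nra.
    rewrite (Rabs_left (c - b * SS * r + AA * r * r)) in K by lra.
    assert (0 <= r * Rabs dd) by nra.
    assert (0 <= (r * Rabs dd) * (- (c - b * SS * r + AA * r * r) - c)) by (apply Rmult_le_pos; lra).
    nra.
Qed.

Lemma nonconvex (a b c : R) (hb : 0 < b) (hc : 0 < c) : ~ convex2 (Dset a b c).
Proof.
  intro Hc.
  set (s := c / (2 * c * c + b)).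
  assert (hs : 0 < s) by (unfold s; apply Rdiv_lt_0_compat; nra).
  assert (hsc : s * c < /2).
  { unfold s. apply (Rmult_lt_reg_r (2 * (2*c*c+b))); [nra|]. field_simplify; nra. }
  assert (hbs : b * s <= c).
  { unfold s. apply (Rmult_le_reg_r (2*c*c+b)); [nra|]. field_simplify; nra. }
  assert (hq : Dset a b c (s, 0)).
  { unfold Dset, Ppoly; simpl. split; [lra|]. split; [lra|]. split; nra. }
  assert (key : forall X, 0 <= X ->
     0 < / 2 + (s/2) * (c - b * (X + s/2) + a * X * (X + s) / 4) < 1).
  { intros X hX. assert (hp : Dset a b c (X, X)).
    { unfold Dset, Ppoly; simpl. replace (X - X) with 0 by ring; lra. }
    pose proof (Hc _ _ (/2) hq hp ltac:(lra)) as H.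
    unfold Dset, Ppoly in H; simpl in H. destruct H as [_ [_ [H1 H2]]].
    replace ((1 - / 2) * s + / 2 * X - ((1 - / 2) * 0 + / 2 * X)) with (s/2) in H1, H2 by field.
    replace (c - b * ((1 - / 2) * s + / 2 * X + ((1 - / 2) * 0 + / 2 * X)) +
        a * ((1 - / 2) * s + / 2 * X) * ((1 - / 2) * 0 + / 2 * X))
      with (c - b * (X + s/2) + a * X * (X + s) / 4) in H1, H2 by field.
    lra. }
  assert (hs1 : s * (/ s) = 1) by (field; lra).
  assert (his : 0 < / s) by (apply Rinv_0_lt_compat; lra).
  destruct (Rle_or_lt a 0) as [ha | ha].
  - set (X := (c + / s) / b).
    assert (hX : 0 <= X) by (unfold X; left; apply Rdiv_lt_0_compat; nra).
    assert (hbX : b * X = c + / s) by (unfold X; field; lra).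
    pose proof (key X hX) as [K1 K2].
    assert (a * X * (X + s) / 4 <= 0).
    { assert (0 <= X * (X + s)) by nra. nra. }
    assert (c - b * (X + s/2) + a * X * (X + s) / 4 <= - / s) by nra.
    nra.
  - set (X := 4 * (b + 1) / a + b * s / 2 + / s).
    assert (h4 : 0 < 4 * (b + 1) / a) by (apply Rdiv_lt_0_compat; lra).
    assert (hX : 0 <= X) by (unfold X; nra).
    assert (haX : a * X / 4 >= b + 1).
    { unfold X. assert (a * (4 * (b+1) / a) = 4 * (b+1)) by (field; lra). nra. }
    pose proof (key X hX) as [K1 K2].
    assert (a * X * (X + s) / 4 >= (b+1) * X) by nra.
    assert (c - b * (X + s/2) + a * X * (X + s) / 4 >= / s) by (unfold X in *; nra).
    nra.
Qed.

Theorem mainTheorem2 (a b c : R) (hb : 0 < b) (hc : 0 < c) :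
  ~ convex2 (Dset a b c)
  /\ (forall x, 0 <= x -> Dset a b c (x, x))
  /\ (forall x y, Dset a b c (x, y) -> Dset a b c (y, x))
  /\ ~ boundedR (fun r => 0 <= r /\ Dset a b c (r, r))
  /\ (forall u v, 0 <= u -> 0 <= v -> u <> v ->
        boundedR (fun r => 0 <= r /\ Dset a b c (r * u, r * v))).
Proof.
  assert (diag : forall x, 0 <= x -> Dset a b c (x, x)).
  { intros x hx. unfold Dset, Ppoly; simpl. replace (x - x) with 0 by ring; lra. }
  split; [apply nonconvex; assumption|].
  split; [exact diag|].
  split.
  { intros x y [h1 [h2 [h3 h4]]]. unfold Dset, Ppoly in *; simpl in *.
    assert (e : / 2 + (y - x) * (c - b * (y + x) + a * y * x)
               = 1 - (/ 2 + (x - y) * (c - b * (x + y) + a * x * y))) by field.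
    rewrite e. repeat split; lra. }
  split.
  { intros [M HM]. pose proof (HM (Rabs M + 1)) as H.
    assert (h0 : 0 <= Rabs M + 1) by (pose proof (Rabs_pos M); lra).
    specialize (H (conj h0 (diag _ h0))).
    rewrite Rabs_pos_eq in H by lra. pose proof (Rle_abs M). lra. }
  intros u v hu hv huv. apply ray_bound; assumption.
Qed.
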